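(* Let $(S,+)$ be an infinite semigroup which is left weakly cancellative and has no idempotent element. Let $A\subseteq S$ be an IP set. Then $A$ can be partitioned into countably infinitely many pairwise disjoint sets, each of which is an IP set in $S$.
   Context: A semigroup $(S,+)$ is left weakly cancellative if for all $a,b\in S$ the set $\{x\in S: a+x=b\}$ is finite. An element $e$ is idempotent if $e+e=e$. For a sequence $\langle x_n\rangle_{n=1}^\infty$ in $S$, $\mathrm{FS}(\langle x_n\rangle_{n=1}^\infty)=\{\sum_{n\in H}x_n : H\text{ a nonempty finite subset of }\mathbb{N}\}$, where sums are taken in increasing order of indices. A set $A\subseteq S$ is an IP set if there is a sequence $\langle x_n\rangle_{n=1}^\infty$ in $S$ with $\mathrm{FS}(\langle x_n\rangle_{n=1}^\infty)\subseteq A$. *)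

(* Defs.v *)
From Stdlib Require Import List Sorted Arith.
Import ListNotations.

Definition finite_set {S : Type} (P : S -> Prop) : Prop :=
  exists l : list S, forall x, P x -> In x l.

Definition infinite_type (S : Type) : Prop := ~ finite_set (fun _ : S => True).

Definition associative_op {S : Type} (op : S -> S -> S) : Prop :=
  forall a b c, op a (op b c) = op (op a b) c.

Definition left_weakly_cancellative {S : Type} (op : S -> S -> S) : Prop :=
  forall a b : S, finite_set (fun x => op a x = b).

Definition idempotent {S : Type} (op : S -> S -> S) (e : S) : Prop := op e e = e.

Fixpoint fsum {S : Type} (op : S -> S -> S) (x : nat -> S) (h : nat) (t : list nat) : S :=
  match t with
  | [] => x h
  | h' :: t' => op (x h) (fsum op x h' t')
  end.

(* FS(<x_n>) : sums over nonempty finite H ⊆ N, taken in increasing order of indices;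
   H is represented by its strictly increasing enumeration h :: t. *)
Definition FS {S : Type} (op : S -> S -> S) (x : nat -> S) (s : S) : Prop :=
  exists (h : nat) (t : list nat), Sorted lt (h :: t) /\ s = fsum op x h t.

Definition IP_set {S : Type} (op : S -> S -> S) (A : S -> Prop) : Prop :=
  exists x : nat -> S, forall s, FS op x s -> A s.

(* Main.v *)
Require Import Defs.
From Stdlib Require Import List Sorted Arith Lia Classical IndefiniteDescription Cantor.
Import ListNotations.

Section Main.
Variable T : Type.
Variable op : T -> T -> T.
Hypothesis Hassoc : associative_op op.
Hypothesis Hlwc : left_weakly_cancellative op.
Hypothesis Hnoid : forall e : T, ~ idempotent op e.

Fixpoint mul (k : nat) (c : T) : T :=
  match k with 0 => c | S k => op c (mul k c) end.

Lemma mul_add c : forall a b, op (mul a c) (mul b c) = mul (a + b + 1) c.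
Proof.
  induction a as [|a IH]; intros b; simpl.
  - rewrite Nat.add_1_r. reflexivity.
  - rewrite <- Hassoc, IH. reflexivity.
Qed.

Lemma mul_idem c a b : a < b -> mul a c = mul b c -> False.
Proof.
  intros Hab Heq.
  assert (Hsh : forall t, mul (t + a) c = mul (t + b) c).
  { induction t; simpl; auto. rewrite IHt; reflexivity. }
  set (p := b - a).
  assert (Hrep : forall r t, mul (t + a) c = mul (t + a + r * p) c).
  { induction r; intros t.
    - rewrite Nat.mul_0_l, Nat.add_0_r. reflexivity.
    - rewrite IHr. replace (t + a + r * p) with ((t + r * p) + a) by lia.
      rewrite Hsh. f_equal. unfold p. nia. }
  set (n := (a + 1) * p - 1).
  apply (Hnoid (mul n c)). unfold idempotent. rewrite mul_add.
  assert (Hn : a <= n) by (unfold n, p; nia).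
  replace n with ((n - a) + a) at 3 by lia.
  rewrite (Hrep (a+1) (n - a)). f_equal. unfold n, p. nia.
Qed.

Lemma inf_pigeon (f : nat -> T) : forall (l : list T) N,
  (forall j, N <= j -> In (f j) l) -> exists c, forall M, exists j, M <= j /\ f j = c.
Proof.
  induction l as [|a l IH]; intros N H.
  - exfalso. exact (H N (le_n N)).
  - destruct (classic (forall M, exists j, M <= j /\ f j = a)) as [Ha|Ha].
    + exists a; exact Ha.
    + apply not_all_ex_not in Ha. destruct Ha as [M0 HM0].
      apply (IH (max N M0)). intros j Hj.
      destruct (H j ltac:(lia)) as [E|E]; auto.
      exfalso. apply HM0. exists j. split; [lia|auto].
Qed.

Lemma fin_pigeon (g : nat -> T) (Bad : list T) :
  (forall k, In (g k) Bad) -> exists a b, a < b /\ g a = g b.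
Proof.
  intros H. apply NNPP. intros Hn.
  assert (HN : NoDup (map g (seq 0 (S (length Bad))))).
  { apply NoDup_map_NoDup_ForallPairs; [|apply seq_NoDup].
    intros u v _ _ E. destruct (lt_eq_lt_dec u v) as [[L|L]|L]; auto;
    exfalso; apply Hn; eauto. }
  apply NoDup_incl_length with (l' := Bad) in HN.
  - rewrite length_map, length_seq in HN. lia.
  - intros z Hz. apply in_map_iff in Hz. destruct Hz as [k [<- _]]. auto.
Qed.

Lemma pairs_fin : forall la lc : list T, exists L, forall v a c,
  In a la -> In c lc -> op a v = c -> In v L.
Proof.
  induction la as [|a0 la IH]; intros lc.
  - exists []. intros v a c [].
  - destruct (IH lc) as [L1 HL1].
    assert (H2 : exists L2, forall v c, In c lc -> op a0 v = c -> In v L2).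
    { clear HL1. induction lc as [|c0 lc IHc].
      - exists []. intros v c [].
      - destruct IHc as [L2 HL2]. destruct (Hlwc a0 c0) as [L3 HL3].
        exists (L3 ++ L2). intros v c [<-|Hc] E; apply in_or_app; eauto. }
    destruct H2 as [L2 HL2]. exists (L1 ++ L2).
    intros v a c [<-|Ha] Hc E; apply in_or_app; eauto.
Qed.

Lemma bad_finite (old : list T) : exists L, forall v,
  (In v old \/ exists a, In a old /\ In (op a v) old) -> In v L.
Proof.
  destruct (pairs_fin old old) as [L HL]. exists (old ++ L).
  intros v [H|[a [Ha Hc]]]; apply in_or_app; eauto.
Qed.

Lemma sorted_single h : Sorted lt [h].
Proof. constructor; constructor. Qed.

Section X.
Variable x : nat -> T.

Lemma tail_infinite N (Bad : list T) :
  exists h t, Sorted lt (h :: t) /\ N <= h /\ ~ In (fsum op x h t) Bad.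
Proof.
  apply NNPP. intros Hn.
  assert (H : forall h t, Sorted lt (h :: t) -> N <= h -> In (fsum op x h t) Bad).
  { intros h t H1 H2. apply NNPP. intros H3. apply Hn. eauto. }
  destruct (inf_pigeon x Bad N) as [c Hc].
  { intros j Hj. exact (H j [] (sorted_single j) Hj). }
  assert (Hb : forall k M, exists h t, Sorted lt (h :: t) /\ M <= h /\ fsum op x h t = mul k c).
  { induction k; intros M.
    - destruct (Hc M) as [j [Hj Ej]]. exists j, []. split; [apply sorted_single|]. simpl; auto.
    - destruct (Hc M) as [j [Hj Ej]]. destruct (IHk (S j)) as [h [t [H1 [H2 H3]]]].
      exists j, (h :: t). split; [|split].
      + constructor; auto; constructor; lia.
      + exact Hj.
      + simpl. rewrite H3, Ej. reflexivity. }
  destruct (fin_pigeon (fun k => mul k c) Bad) as [a [b [Hab E]]].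
  { intros k. destruct (Hb k N) as [h [t [H1 [H2 H3]]]]. rewrite <- H3. auto. }
  exact (mul_idem c a b Hab E).
Qed.

Lemma next N (old : list T) : exists p : nat * list nat,
  Sorted lt (fst p :: snd p) /\ N <= fst p /\ ~ In (fsum op x (fst p) (snd p)) old /\
  forall a, In a old -> ~ In (op a (fsum op x (fst p) (snd p))) old.
Proof.
  destruct (bad_finite old) as [L HL].
  destruct (tail_infinite N L) as [h [t [H1 [H2 H3]]]].
  exists (h, t). simpl. split; [auto|split; [auto|split]].
  - intros Hi. apply H3, HL. auto.
  - intros a Ha Hi. apply H3, HL. eauto.
Qed.

Definition pick N old : nat * list nat :=
  proj1_sig (constructive_indefinite_description _ (next N old)).

Fixpoint st (k : nat) : nat * list T :=
  match k with
  | 0 => (0, [])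
  | S k => let p := st k in
           let b := pick (fst p) (snd p) in
           let v := fsum op x (fst b) (snd b) in
           (S (list_max (fst b :: snd b)), snd p ++ v :: map (fun a => op a v) (snd p))
  end.

Definition Bk k := pick (fst (st k)) (snd (st k)).
Definition y k := fsum op x (fst (Bk k)) (snd (Bk k)).

Lemma Bspec k : Sorted lt (fst (Bk k) :: snd (Bk k)) /\ fst (st k) <= fst (Bk k) /\
  ~ In (y k) (snd (st k)) /\ forall a, In a (snd (st k)) -> ~ In (op a (y k)) (snd (st k)).
Proof.
  unfold y, Bk, pick. exact (proj2_sig (constructive_indefinite_description _ (next _ _))).
Qed.

Lemma st_S_fst k : fst (st (S k)) = S (list_max (fst (Bk k) :: snd (Bk k))).
Proof. reflexivity. Qed.
Lemma st_S_snd k : snd (st (S k)) = snd (st k) ++ y k :: map (fun a => op a (y k)) (snd (st k)).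
Proof. reflexivity. Qed.

Lemma in_block_lt k z : In z (fst (Bk k) :: snd (Bk k)) -> z < fst (st (S k)).
Proof.
  intros Hz. rewrite st_S_fst.
  assert (Hf := proj1 (list_max_le (fst (Bk k) :: snd (Bk k)) _) (le_n _)).
  rewrite Forall_forall in Hf. specialize (Hf z Hz). lia.
Qed.

Lemma st_mono i j : i <= j -> fst (st i) <= fst (st j).
Proof.
  induction 1; auto.
  assert (fst (st m) < fst (st (S m))).
  { destruct (Bspec m) as [_ [H2 _]]. pose proof (in_block_lt m (fst (Bk m)) (or_introl eq_refl)). lia. }
  lia.
Qed.

End X.

Lemma sorted_ge : forall t h, Sorted lt (h :: t) -> forall z, In z t -> h < z.
Proof.
  induction t as [|a t IH]; intros h H z Hz; [destruct Hz|].
  inversion H as [|? ? H1 H2]; subst. inversion H2; subst.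
  destruct Hz as [<-|Hz]; auto.
  specialize (IH a H1 z Hz). lia.
Qed.

Lemma sorted_snoc_lt : forall l k, Sorted lt (l ++ [k]) -> forall z, In z l -> z < k.
Proof.
  induction l as [|h l IH]; intros k H z Hz; [destruct Hz|].
  simpl in H. destruct Hz as [<-|Hz].
  - apply (sorted_ge _ _ H). apply in_or_app; right; left; auto.
  - inversion H; subst. eauto.
Qed.

Lemma sorted_app_inv_l : forall l1 l2, Sorted lt (l1 ++ l2) -> Sorted lt l1.
Proof.
  induction l1 as [|b l1 IH]; intros l2 H; [constructor|].
  simpl in H. inversion H as [|? ? H1 H2]; subst. constructor; eauto.
  destruct l1 as [|n l1]; constructor. inversion H2; auto.
Qed.

Lemma sorted_app : forall l1 a l2, Sorted lt l1 -> Sorted lt (a :: l2) ->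
  (forall z, In z l1 -> z < a) -> Sorted lt (l1 ++ a :: l2).
Proof.
  induction l1 as [|b l1 IH]; intros a l2 H1 H2 H3; simpl; auto.
  inversion H1 as [|? ? H4 H5]; subst. constructor.
  - apply IH; auto. intros z Hz; apply H3; right; auto.
  - destruct l1 as [|n l1]; simpl; constructor.
    + apply H3; left; auto.
    + inversion H5; auto.
Qed.

Lemma sorted_last_le h t : Sorted lt (h :: t) -> forall z, In z (h :: t) -> z <= last t h.
Proof.
  intros H z Hz. destruct t as [|a t0].
  - destruct Hz as [<-|[]]; simpl; lia.
  - destruct (exists_last (l := a :: t0) ltac:(discriminate)) as [t' [k E]].
    rewrite E in *. rewrite last_last.
    change (h :: t' ++ [k]) with ((h :: t') ++ [k]) in H, Hz.
    apply in_app_or in Hz. destruct Hz as [Hz|[<-|[]]]; [|lia].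
    pose proof (sorted_snoc_lt _ _ H z Hz). lia.
Qed.

Lemma fsum_snoc (f : nat -> T) : forall t h k, fsum op f h (t ++ [k]) = op (fsum op f h t) (f k).
Proof.
  induction t as [|a t IH]; intros h k; simpl; auto.
  rewrite IH. apply Hassoc.
Qed.

Lemma fsum_app (f : nat -> T) : forall t h h' t',
  fsum op f h (t ++ h' :: t') = op (fsum op f h t) (fsum op f h' t').
Proof.
  induction t as [|a t IH]; intros h h' t'; simpl; auto.
  rewrite IH. apply Hassoc.
Qed.

Lemma fsum_map (f : nat -> T) (g : nat -> nat) : forall t h,
  fsum op (fun i => f (g i)) h t = fsum op f (g h) (map g t).
Proof.
  induction t as [|a t IH]; intros h; simpl; auto. rewrite IH; auto.
Qed.

Lemma sorted_map (g : nat -> nat) : (forall i j, i < j -> g i < g j) ->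
  forall l, Sorted lt l -> Sorted lt (map g l).
Proof.
  intros Hg l H. induction H as [|a l H IH Hd]; simpl; constructor; auto.
  destruct Hd; simpl; constructor; auto.
Qed.

Lemma last_map (g : nat -> nat) : forall t h, last (map g t) (g h) = g (last t h).
Proof.
  induction t as [|a t IH]; intros h; simpl; auto.
  destruct t as [|b t]; simpl; auto.
  specialize (IH h). simpl in IH. exact IH.
Qed.

Section Y.
Variable x : nat -> T.

Lemma old_complete : forall k h t, Sorted lt (h :: t) -> (forall z, In z (h :: t) -> z < k) ->
  In (fsum op (y x) h t) (snd (st x k)).
Proof.
  induction k as [|k IH]; intros h t Hs Hk.
  - specialize (Hk h (or_introl eq_refl)). lia.
  - rewrite st_S_snd. destruct t as [|a t0].
    + assert (h < S k) by (apply Hk; left; auto).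
      destruct (Nat.eq_dec h k) as [->|Hne].
      * apply in_or_app; right; left; reflexivity.
      * apply in_or_app; left. apply IH; auto. intros z [<-|[]]. lia.
    + destruct (exists_last (l := a :: t0) ltac:(discriminate)) as [t' [j E]].
      rewrite E in *.
      assert (Hj : j < S k) by (apply Hk; right; apply in_or_app; right; left; auto).
      assert (Hle := sorted_last_le _ _ Hs). rewrite last_last in Hle.
      destruct (Nat.eq_dec j k) as [->|Hne].
      * apply in_or_app; right; right. rewrite fsum_snoc.
        apply (in_map (fun a0 => op a0 (y x k))).
        change (h :: t' ++ [k]) with ((h :: t') ++ [k]) in Hs.
        apply IH.
        -- exact (sorted_app_inv_l _ _ Hs).
        -- intros z Hz. exact (sorted_snoc_lt _ _ Hs z Hz).
      * apply in_or_app; left. apply IH; auto.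
        intros z Hz. specialize (Hle z Hz). lia.
Qed.

Lemma sums_lt h1 t1 h2 t2 : Sorted lt (h1 :: t1) -> Sorted lt (h2 :: t2) ->
  last t2 h2 < last t1 h1 -> fsum op (y x) h1 t1 <> fsum op (y x) h2 t2.
Proof.
  intros S1 S2 Hl E.
  assert (Hin : forall k, last t2 h2 < k -> In (fsum op (y x) h2 t2) (snd (st x k))).
  { intros k Hk. apply old_complete; auto. intros z Hz.
    pose proof (sorted_last_le _ _ S2 z Hz). lia. }
  destruct t1 as [|a t0].
  - simpl in Hl. destruct (Bspec x h1) as [_ [_ [H3 _]]].
    apply H3. simpl in E. rewrite E. apply Hin; auto.
  - destruct (exists_last (l := a :: t0) ltac:(discriminate)) as [t' [k Ek]].
    rewrite Ek in *. rewrite last_last in Hl. rewrite fsum_snoc in E.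
    destruct (Bspec x k) as [_ [_ [_ H4]]].
    change (h1 :: t' ++ [k]) with ((h1 :: t') ++ [k]) in S1.
    apply (H4 (fsum op (y x) h1 t')).
    + apply old_complete. exact (sorted_app_inv_l _ _ S1).
      intros z Hz. exact (sorted_snoc_lt _ _ S1 z Hz).
    + rewrite E. apply Hin; auto.
Qed.

Lemma y_to_x : forall t h, Sorted lt (h :: t) -> exists h' t',
  Sorted lt (h' :: t') /\ fst (st x h) <= h' /\ fsum op (y x) h t = fsum op x h' t'.
Proof.
  induction t as [|a t IH]; intros h Hs.
  - destruct (Bspec x h) as [H1 [H2 _]]. exists (fst (Bk x h)), (snd (Bk x h)). auto.
  - inversion Hs as [|? ? Hs1 Hd]; subst. inversion Hd; subst.
    destruct (IH a Hs1) as [h'' [t'' [H1 [H2 H3]]]].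
    destruct (Bspec x h) as [B1 [B2 _]].
    exists (fst (Bk x h)), (snd (Bk x h) ++ h'' :: t''). split; [|split; auto].
    + change (fst (Bk x h) :: snd (Bk x h) ++ h'' :: t'') with
        ((fst (Bk x h) :: snd (Bk x h)) ++ h'' :: t'').
      apply sorted_app; auto. intros z Hz.
      pose proof (in_block_lt x h z Hz). pose proof (st_mono x (S h) a ltac:(lia)). lia.
    + simpl. rewrite H3, fsum_app. reflexivity.
Qed.

End Y.

Definition idx n j := Cantor.to_nat (n, j).

Lemma idx_mono n : forall i j, i < j -> idx n i < idx n j.
Proof.
  intros i j H. unfold idx.
  pose proof (Cantor.to_nat_spec n i). pose proof (Cantor.to_nat_spec n j). nia.
Qed.

Lemma idx_inj n m i j : idx n i = idx m j -> n = m.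
Proof. intros H. unfold idx in H. apply Cantor.to_nat_inj in H. congruence. Qed.

End Main.

Theorem theorem2p1 (S : Type) (op : S -> S -> S)
  (Hassoc : associative_op op)
  (Hinf : infinite_type S)
  (Hlwc : left_weakly_cancellative op)
  (Hnoid : forall e : S, ~ idempotent op e)
  (A : S -> Prop) (HA : IP_set op A) :
  exists B : nat -> S -> Prop,
    (forall s, A s <-> exists n, B n s) /\
    (forall m n s, m <> n -> B m s -> B n s -> False) /\
    (forall n, IP_set op (B n)).
Proof.
  destruct HA as [x Hx].
  set (yy := y S op Hassoc Hlwc Hnoid x).
  set (C := fun n s => FS op (fun j => yy (idx n j)) s).
  assert (CA : forall n s, C n s -> A s).
  { intros n s [h [t [Hs ->]]]. apply Hx.
    rewrite (fsum_map S op yy (idx n)).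
    destruct (y_to_x S op Hassoc Hlwc Hnoid x (map (idx n) t) (idx n h)) as [h' [t' [H1 [_ H3]]]].
    - exact (sorted_map (idx n) (idx_mono n) (h :: t) Hs).
    - exists h', t'. split; auto. }
  assert (Cdisj : forall n m s, n <> m -> C n s -> C m s -> False).
  { intros n m s Hnm [h1 [t1 [S1 E1]]] [h2 [t2 [S2 E2]]].
    rewrite (fsum_map S op yy (idx n)) in E1. rewrite (fsum_map S op yy (idx m)) in E2.
    apply (sorted_map (idx n) (idx_mono n)) in S1. apply (sorted_map (idx m) (idx_mono m)) in S2.
    simpl in S1, S2.
    assert (Hne : last (map (idx n) t1) (idx n h1) <> last (map (idx m) t2) (idx m h2)).
    { rewrite !last_map. intros E. apply Hnm. exact (idx_inj _ _ _ _ E). }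
    destruct (Nat.lt_gt_cases (last (map (idx n) t1) (idx n h1)) (last (map (idx m) t2) (idx m h2))) as [[L|L] _];
      [exact Hne|..].
    - apply (sums_lt S op Hassoc Hlwc Hnoid x _ _ _ _ S2 S1 L). unfold yy in E1, E2. congruence.
    - apply (sums_lt S op Hassoc Hlwc Hnoid x _ _ _ _ S1 S2 L). unfold yy in E1, E2. congruence. }
  exists (fun n s => C n s \/ (n = 0 /\ A s /\ ~ exists m, C m s)).
  split; [|split].
  - intros s; split.
    + intros Hs. destruct (classic (exists m, C m s)) as [[m Hm]|Hn]; eauto.
    + intros [n [Hc|[_ [Ha _]]]]; eauto.
  - intros m n s Hmn [Hm|[Em [_ Hm]]] [Hn|[En [_ Hn]]]; eauto.
    lia.
  - intros n. exists (fun j => yy (idx n j)). intros s Hs. left. exact Hs.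
Qed.
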